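(* Suppose Assumptions RA and ER hold. Then the identified set $\Theta_I(p_{df})$ for the proportion of defiers $p_{df}$ is $$\Theta_I(p_{df})=\Big[\max\Big\{\max_{s\in\{0,1\}}\sup_{A}\big\{\mathbb P(Y\in A,D=s\mid Z=1-s)-\mathbb P(Y\in A,D=s\mid Z=s)\big\},\,0\Big\},\ \min\{\mathbb E[D\mid Z=0],\mathbb E[1-D\mid Z=1]\}\Big]$$ (the supremum being over Borel sets $A\subseteq\mathcal Y$) if $$\max_{d\in\{0,1\}}\int_{\mathcal Y}\sup_{z\in\{0,1\}} f_{Y,D\mid Z}(y,d\mid z)\,d\mu(y)\le 1,$$ and $\Theta_I(p_{df})=\emptyset$ otherwise. In particular, the last displayed inequality is implied by Assumptions RA and ER.
   Context: Setup: $Z\in\{0,1\}$ is a binary instrument with $0<\mathbb P(Z=1)<1$, $D\in\{0,1\}$ a binary treatment, $Y$ a real outcome with support $\mathcal Y$. Latent variables: potential treatments $D_0,D_1\in\{0,1\}$ and potential outcomes $Y_{dz}$, $d,z\in\{0,1\}$ (outcome if treatment set to $d$ and instrument set to $z$). Observed data satisfy $D=D_1Z+D_0(1-Z)$ and $Y=(Y_{11}Z+Y_{10}(1-Z))D+(Y_{01}Z+Y_{00}(1-Z))(1-D)$. The type is $T=(D_0,D_1)$: always-takers $a=(1,1)$, never-takers $n=(0,0)$, compliers $c=(0,1)$, defiers $df=(1,0)$; $p_t=\mathbb P(T=t)$. Assumptions: RA (random assignment): $Z$ is independent of $(Y_{11},Y_{10},Y_{01},Y_{00},D_1,D_0)$.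 ER (exclusion restriction): $Y_{dz}=Y_{dz'}\equiv Y_d$ for all $d,z,z'$. MON (monotonicity): either $D_1\ge D_0$ (a.s.) or $D_0\ge D_1$ (a.s.). $f_{Y,D\mid Z}(y,d\mid z)\equiv f_{Y\mid D,Z}(y\mid d,z)\mathbb P(D=d\mid Z=z)$, where $f_{Y\mid D,Z}$ is the conditional density of $Y$ given $D=d,Z=z$ with respect to a known dominating measure $\mu$ on $\mathcal Y$. The identified set of a parameter under a set of assumptions is the set of values the parameter takes over all joint distributions of the latent variables and $Z$ that satisfy the assumptions and generate, through the model, the observed distribution of $(Y,D,Z)$; bounds are sharp if they coincide with the identified set. *)

(* Defs.v *)
From HB Require Import structures.
From mathcomp Require Import all_boot all_order all_algebra.
From mathcomp Require Import all_classical all_reals all_analysis measurable_realfun.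
Set Implicit Arguments. Unset Strict Implicit. Unset Printing Implicit Defensive.
Import Order.TTheory GRing.Theory Num.Theory.
Local Open Scope classical_set_scope.
Local Open Scope ring_scope.

Definition obsD (Om : Type) (D0 D1 Z : Om -> bool) (w : Om) : bool :=
  if Z w then D1 w else D0 w.

Definition obsY (R : Type) (Om : Type) (Yp : bool -> bool -> Om -> R)
  (D0 D1 Z : Om -> bool) (w : Om) : R :=
  Yp (obsD D0 D1 Z w) (Z w) w.

Definition latent_vec (R : Type) (Om : Type) (Yp : bool -> bool -> Om -> R)
  (D0 D1 : Om -> bool) (w : Om) : R * R * R * R * bool * bool :=
  (Yp true true w, Yp true false w, Yp false true w, Yp false false w, D1 w, D0 w).

(* A latent model on the probability space (Om, P), with potential outcomes
   Yp d z = Y_{dz}, potential treatments D0, D1 and instrument Z, satisfying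
   RA and ER, and generating the observed distribution described by
   pz = P(Z = 1) and Q d z A = P(Y in A, D = d | Z = z). *)
Definition RA_ER_model (R : realType) (pz : R)
  (Q : bool -> bool -> set R -> \bar R)
  (d : measure_display) (Om : measurableType d) (P : probability Om R)
  (Yp : bool -> bool -> Om -> R) (D0 D1 Z : Om -> bool) : Prop :=
  (forall a b, measurable_fun setT (Yp a b)) /\
      measurable_fun setT D0 /\ measurable_fun setT D1 /\ measurable_fun setT Z /\
      (forall (z : bool) (E : set (R * R * R * R * bool * bool)), measurable E ->
         P ([set w | Z w = z] `&` (latent_vec Yp D0 D1 @^-1` E))
         = (P [set w | Z w = z] * P (latent_vec Yp D0 D1 @^-1` E))%E) /\
      (forall (dd : bool) (w : Om), Yp dd true w = Yp dd false w) /\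
      P [set w | Z w] = pz%:E /\
      (forall (A : set R), measurable A -> forall dd z : bool,
         P [set w | A (obsY Yp D0 D1 Z w) /\ obsD D0 D1 Z w = dd /\ Z w = z]
         = (Q dd z A * P [set w | Z w = z])%E).

Definition pdf_identified_set (R : realType) (pz : R)
  (Q : bool -> bool -> set R -> \bar R) : set R :=
  [set p | exists (d : measure_display) (Om : measurableType d)
             (P : probability Om R) (Yp : bool -> bool -> Om -> R)
             (D0 D1 Z : Om -> bool),
           RA_ER_model pz Q P Yp D0 D1 Z /\
           P [set w | D0 w = true /\ D1 w = false] = p%:E].

Definition sup_diff (R : realType) (Q : bool -> bool -> set R -> \bar R)
  (s : bool) : \bar R :=
  ereal_sup [set (Q s (~~ s) A - Q s s A)%E | A in (measurable : set (set R))].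

Definition pdf_lower (R : realType) (Q : bool -> bool -> set R -> \bar R) : \bar R :=
  maxe (maxe (sup_diff Q false) (sup_diff Q true)) 0%E.

Definition pdf_upper (R : realType) (Q : bool -> bool -> set R -> \bar R) : \bar R :=
  mine (Q true false setT) (Q false true setT).

Definition density_cond (R : realType) (mu : {measure set R -> \bar R})
  (f : bool -> bool -> R -> \bar R) : Prop :=
  forall dd : bool, (\int[mu]_y maxe (f dd false y) (f dd true y) <= 1)%E.

(* Main.v *)
Require Import Defs.
From HB Require Import structures.
From mathcomp Require Import all_boot all_order all_algebra.
From mathcomp Require Import all_classical all_reals all_analysis measurable_realfun.
From mathcomp Require Import lra.
Import Order.TTheory GRing.Theory Num.Theory.
Local Open Scope classical_set_scope.
Local Open Scope ring_scope.

Lemma mpre d1 d2 (T1 : measurableType d1) (T2 : measurableType d2) (f : T1 -> T2) (B : set T2) :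
  measurable_fun setT f -> measurable B -> measurable (f @^-1` B).
Proof. by move=> mf mB; rewrite -[_ @^-1` _]setTI; apply: mf. Qed.

Lemma ecancel_r (R : realType) (x y : \bar R) (r : R) : (0 < r)%R ->
  (x * r%:E = r%:E * y)%E -> x = y.
Proof.
move=> r0 /(congr1 (fun t => t * r^-1%:E)%E).
rewrite -muleA -EFinM divff ?gt_eqF// mule1 muleC muleA -EFinM mulVf ?gt_eqF//.
by rewrite mul1e.
Qed.

Section model.
Local Open Scope ereal_scope.
Context (R : realType) (pz : R) (Q : bool -> bool -> set R -> \bar R)
  (d : measure_display) (Om : measurableType d) (P : probability Om R)
  (Yp : bool -> bool -> Om -> R) (D0 D1 Z : Om -> bool).
Hypothesis pz01 : (0 < pz < 1)%R.
Hypothesis HM : RA_ER_model pz Q P Yp D0 D1 Z.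

Definition comp (dd z : bool) (v : R * R * R * R * bool * bool) : R :=
  match dd, z with
  | true, true => v.1.1.1.1.1
  | true, false => v.1.1.1.1.2
  | false, true => v.1.1.1.2
  | false, false => v.1.1.2 end.

Definition dsel (z : bool) (v : R * R * R * R * bool * bool) : bool :=
  if z then v.1.2 else v.2.

Lemma measurable_comp dd z : measurable_fun setT (comp dd z).
Proof.
case: dd; case: z => /=;
repeat (apply: measurableT_comp; [exact: measurable_fst || exact: measurable_snd|]);
  exact: measurable_id || exact: measurable_fst || exact: measurable_snd.
Qed.

Lemma measurable_dsel z : measurable_fun setT (dsel z).
Proof.
case: z => /=.
  apply: measurableT_comp; [exact: measurable_snd| exact: measurable_fst].
exact: measurable_snd.
Qed.

Definition Dz (z : bool) (w : Om) := if z then D1 w else D0 w.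

Lemma PZ z : P [set w | Z w = z] = (if z then pz else 1 - pz)%:E.
Proof.
case: HM => _ [_ [_ [mZ [_ [_ [Pz _]]]]]].
have mZt : measurable [set w | Z w] by rewrite -[X in measurable X]setTI; exact: mZ.
case: z; first by rewrite -Pz; congr (P _); apply/seteqP; split => w /=.
rewrite EFinB -Pz -probability_setC//; congr (P _); apply/seteqP; split => w /=.
  by move=> ->.
by case: (Z w).
Qed.

Lemma PZ_pos z : (0 < if z then pz else 1 - pz)%R.
Proof. by case/andP: pz01 => ? ?; case: z => //; rewrite subr_gt0. Qed.

Lemma obs_set dd z (A : set R) :
  [set w | A (obsY Yp D0 D1 Z w) /\ obsD D0 D1 Z w = dd /\ Z w = z] =
  [set w | Z w = z] `&` (latent_vec Yp D0 D1 @^-1` (comp dd z @^-1` A `&` dsel z @^-1` [set dd])).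
Proof.
apply/seteqP; split => w; rewrite /obsY /obsD /latent_vec /preimage /=;
case: (Z w); case: (D0 w); case: (D1 w); case: dd; case: z => /=; intuition; try congruence.
Qed.

Lemma lat_set dd z (A : set R) :
  latent_vec Yp D0 D1 @^-1` (comp dd z @^-1` A `&` dsel z @^-1` [set dd]) =
  [set w | A (Yp dd z w) /\ Dz z w = dd].
Proof. by apply/seteqP; split => w; rewrite /latent_vec /preimage /Dz /=; case: dd; case: z. Qed.

Lemma Q_model dd z A : measurable A ->
  Q dd z A = P [set w | A (Yp dd z w) /\ Dz z w = dd].
Proof.
move=> mA.
case: HM => mY [mD0 [mD1 [mZ [RA [ER [Pz obs]]]]]].
have := obs A mA dd z.
set E := comp dd z @^-1` A `&` dsel z @^-1` [set dd].
have mE : measurable E.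
  by apply: measurableI; apply: mpre => //; [exact: measurable_comp|exact: measurable_dsel].
rewrite obs_set.
rewrite RA // PZ.
rewrite /E lat_set.
by move/esym/ecancel_r => ->//; exact: PZ_pos.
Qed.

Lemma mS (dd z z' b : bool) (A : set R) : measurable A ->
  measurable [set w | A (Yp dd z w) /\ Dz z' w = b].
Proof.
case: HM => mY [mD0 [mD1 [mZ _]]] mA.
rewrite (_ : [set w | _] = Yp dd z @^-1` A `&` Dz z' @^-1` [set b]) //.
apply: measurableI; apply: mpre => //; rewrite /Dz; case: z' => //.
Qed.

Definition pdfE := P [set w | D0 w = true /\ D1 w = false].

Lemma mpdf : measurable [set w | D0 w = true /\ D1 w = false].
Proof.
case: HM => mY [mD0 [mD1 [mZ _]]].
rewrite (_ : [set w | _] = D0 @^-1` [set true] `&` D1 @^-1` [set false]) //.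
by apply: measurableI; apply: mpre.
Qed.

Lemma up1 : pdfE <= Q true false setT.
Proof.
rewrite Q_model //; apply: le_measure; rewrite ?inE; [exact: mpdf|exact: mS|].
by move=> w [] /= -> _.
Qed.

Lemma up2 : pdfE <= Q false true setT.
Proof.
rewrite Q_model //; apply: le_measure; rewrite ?inE; [exact: mpdf|exact: mS|].
by move=> w [] /= _ ->.
Qed.

Lemma sup1 A : measurable A -> Q true false A - Q true true A <= pdfE.
Proof.
move=> mA; rewrite !Q_model //.
have ER : forall dd w, Yp dd true w = Yp dd false w by case: HM => _ [_ [_ [_ [_ [ER _]]]]].
have -> : [set w | A (Yp true true w) /\ Dz true w = true] =
          [set w | A (Yp true false w) /\ Dz true w = true].
  by apply/seteqP; split => w /=; rewrite ER.
rewrite leeBlDr; last by apply: (@fin_num_measure _ _ _ P); exact: mS.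
apply: (@le_trans _ _ (P ([set w | D0 w = true /\ D1 w = false] `|`
   [set w | A (Yp true false w) /\ Dz true w = true]))).
  apply: le_measure; rewrite ?inE; [exact: mS| |].
  - by apply: measurableU; [exact: mpdf|exact: mS].
  - move=> w [hA hD] /=; rewrite /Dz /= in hD *; move: hD hA.
    by case: (D1 w) => /=; [right|left].
apply: measureU2; [exact: mpdf|exact: mS].
Qed.

Lemma sup0 A : measurable A -> Q false true A - Q false false A <= pdfE.
Proof.
move=> mA; rewrite !Q_model //.
have ER : forall dd w, Yp dd true w = Yp dd false w by case: HM => _ [_ [_ [_ [_ [ER _]]]]].
have -> : [set w | A (Yp false true w) /\ Dz true w = false] =
          [set w | A (Yp false false w) /\ Dz true w = false].
  by apply/seteqP; split => w /=; rewrite ER.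
rewrite leeBlDr; last by apply: (@fin_num_measure _ _ _ P); exact: mS.
apply: (@le_trans _ _ (P ([set w | D0 w = true /\ D1 w = false] `|`
   [set w | A (Yp false false w) /\ Dz false w = false]))).
  apply: le_measure; rewrite ?inE; [exact: mS| |].
  - by apply: measurableU; [exact: mpdf|exact: mS].
  - move=> w [hA hD] /=; rewrite /Dz /= in hD *; move: hD hA.
    by case: (D0 w) => /=; [left|right].
apply: measureU2; [exact: mpdf|exact: mS].
Qed.

End model.


Section data.
Local Open Scope ereal_scope.
Context (R : realType) (Q : bool -> bool -> {measure set R -> \bar R})
  (mu : {measure set R -> \bar R}) (f : bool -> bool -> R -> \bar R).
Hypothesis Q1 : forall z : bool, (Q false z setT + Q true z setT = 1)%E.
Hypothesis mf : forall dd z : bool, measurable_fun setT (f dd z).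
Hypothesis f0 : forall (dd z : bool) (y : R), (0 <= f dd z y)%E.
Hypothesis Qf : forall (dd z : bool) (A : set R), measurable A ->
     Q dd z A = (\int[mu]_(y in A) f dd z y)%E.

Lemma QT_le1 dd z : Q dd z setT <= 1.
Proof.
rewrite -(Q1 z); case: dd.
  by rewrite leeDr.
by rewrite leeDl.
Qed.

Lemma Q_fin dd z A : measurable A -> Q dd z A \is a fin_num.
Proof.
move=> mA; rewrite ge0_fin_numE ?measure_ge0//.
apply: (le_lt_trans (le_measure _ _ _ (subsetT A))); rewrite ?inE//.
by apply: (le_lt_trans (QT_le1 dd z)); rewrite ltey.
Qed.

Lemma Q_le1 dd z A : measurable A -> Q dd z A <= 1.
Proof.
move=> mA; apply: le_trans (QT_le1 dd z).
by apply: le_measure; rewrite ?inE.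
Qed.

Lemma ubnd_lower (s : bool) (A : set R) : measurable A ->
  Q s (~~ s) A - Q s s A <= sup_diff (fun dd z => Q dd z) s.
Proof. by move=> mA; apply: ereal_sup_ubound; exists A. Qed.

Lemma dens_from (q : \bar R) :
  pdf_lower (fun dd z => Q dd z) <= q -> q <= pdf_upper (fun dd z => Q dd z) ->
  density_cond mu f.
Proof.
rewrite /pdf_lower /pdf_upper ge_max le_min => /andP[] + _ /andP[u1 u2].
rewrite ge_max => /andP[l0 l1] dd.
case: dd.
- pose B := setT `&` [set y | f true true y < f true false y].
  have mB : measurable B by apply: measurable_lte.
  have mCB : measurable (~` B) by apply: measurableC.
  rewrite [X in X <= _](_ : _ = \int[mu]_(y in B `|` ~` B) maxe (f true false y) (f true true y)); last by rewrite setUv.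
  rewrite ge0_integral_setU //; last 3 first.
  + by rewrite setUv; exact: measurable_maxe.
  + by move=> y _; rewrite le_max f0.
  + by rewrite /disj_set setICr.
  rewrite (eq_integral (f true false)); last first.
    by move=> y; rewrite inE => -[_ /= h]; rewrite max_l// ltW.
  rewrite [X in _ + X](eq_integral (f true true)); last first.
    by move=> y; rewrite inE => /= h; rewrite max_r// leNgt; apply/negP => h'; apply: h.
  rewrite -!Qf //.
  have h1 := le_trans (le_trans (@ubnd_lower true B mB) l1) u2.
  have e1 : Q true true setT = Q true true B + Q true true (~` B).
    by rewrite -measureU ?setUv//; rewrite setICr.
  have fa := Q_fin true false B mB; have fb := Q_fin true true B mB; have fc := Q_fin true true _ mCB.
  have fx := Q_fin false true _ measurableT; have fy := Q_fin true true _ measurableT.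
  move: h1 e1 (Q1 true).
  rewrite -(fineK fa) -(fineK fb) -(fineK fc) -(fineK fx) -(fineK fy).
  rewrite -EFinB !lee_fin -!EFinD => H1 E1 E2.
  have {E1}E1 := EFin_inj E1; have {E2}E2 := EFin_inj E2.
  lra.
- pose B := setT `&` [set y | f false false y < f false true y].
  have mB : measurable B by apply: measurable_lte.
  have mCB : measurable (~` B) by apply: measurableC.
  rewrite [X in X <= _](_ : _ = \int[mu]_(y in B `|` ~` B) maxe (f false false y) (f false true y)); last by rewrite setUv.
  rewrite ge0_integral_setU //; last 3 first.
  + by rewrite setUv; exact: measurable_maxe.
  + by move=> y _; rewrite le_max f0.
  + by rewrite /disj_set setICr.
  rewrite (eq_integral (f false true)); last first.
    by move=> y; rewrite inE => -[_ /= h]; rewrite max_r// ltW.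
  rewrite [X in _ + X](eq_integral (f false false)); last first.
    by move=> y; rewrite inE => /= h; rewrite max_l// leNgt; apply/negP => h'; apply: h.
  rewrite -!Qf //.
  have h1 := le_trans (le_trans (@ubnd_lower false B mB) l0) u1.
  have e1 : Q false false setT = Q false false B + Q false false (~` B).
    by rewrite -measureU ?setUv//; rewrite setICr.
  have fa := Q_fin false true B mB; have fb := Q_fin false false B mB; have fc := Q_fin false false _ mCB.
  have fx := Q_fin true false _ measurableT; have fy := Q_fin false false _ measurableT.
  move: h1 e1 (Q1 false).
  rewrite -(fineK fa) -(fineK fb) -(fineK fc) -(fineK fx) -(fineK fy).
  rewrite -EFinB !lee_fin -!EFinD => H1 E1 E2.
  have {E1}E1 := EFin_inj E1; have {E2}E2 := EFin_inj E2.
  lra.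
Qed.

End data.

Section data2.
Local Open Scope ereal_scope.
Context (R : realType) (Q : bool -> bool -> {measure set R -> \bar R})
  (mu : {measure set R -> \bar R}) (f : bool -> bool -> R -> \bar R).
Hypothesis Q1 : forall z : bool, (Q false z setT + Q true z setT = 1)%E.
Hypothesis mf : forall dd z : bool, measurable_fun setT (f dd z).
Hypothesis f0 : forall (dd z : bool) (y : R), (0 <= f dd z y)%E.
Hypothesis Qf : forall (dd z : bool) (A : set R), measurable A ->
     Q dd z A = (\int[mu]_(y in A) f dd z y)%E.

Lemma fint dd z : mu.-integrable setT (f dd z).
Proof.
apply/integrableP; split; first exact: mf.
rewrite (eq_integral (f dd z)); last by move=> y _; rewrite gee0_abs.
rewrite -Qf //; apply: (le_lt_trans (@QT_le1 _ _ Q1 dd z)); exact: ltey.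
Qed.

Lemma mh dd z : measurable_fun setT (fun y => fine (f dd z y)).
Proof. exact: (measurableT_comp (fine_measurable measurableT) (mf dd z)). Qed.

Lemma h_ge0 dd z y : (0 <= fine (f dd z y))%R.
Proof. exact: fine_ge0. Qed.

Lemma Qh dd z A : measurable A -> Q dd z A = \int[mu]_(y in A) (fine (f dd z y))%:E.
Proof.
move=> mA; rewrite Qf //; apply: ge0_ae_eq_integral => //.
- exact: measurable_funTS.
- apply: measurable_funTS; exact: measurableT_comp (mh dd z).
- by move=> y _; rewrite lee_fin h_ge0.
- have := integrable_ae measurableT (fint dd z).
  apply: filterS => y Hy Ay; rewrite fineK //; exact: Hy.
Qed.
End data2.


Definition theta (R : realType) (a M : R) : R := if M == 0 then 0 else a / M.
Arguments theta {R}.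

Lemma thetaP (R : realType) (a M : R) : 0 <= a <= M ->
  0 <= theta a M <= 1 /\ theta a M * M = a.
Proof.
move=> /andP[a0 aM]; rewrite /theta; case: eqP => [M0|/eqP M0].
  by subst M; split; [rewrite lexx ler01|lra].
have Mp : 0 < M by rewrite lt_neqAle eq_sym M0 (le_trans a0 aM).
split; last by rewrite mulfVK.
apply/andP; split; first by rewrite divr_ge0 // ltW.
by rewrite ler_pdivrMr // mul1r.
Qed.



Section dmeas.
Local Open Scope ereal_scope.
Context d (T : measurableType d) (R : realType) (mu : {measure set T -> \bar R}).
Variables (g : T -> R) (mg : measurable_fun setT g) (g0 : forall x, (0 <= g x)%R).

Definition dm (_ : measurable_fun setT g) (_ : forall x, (0 <= g x)%R) := fun A => \int[mu]_(x in A) (g x)%:E.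

Let dm0 : dm mg g0 set0 = 0. Proof. by rewrite /dm integral_set0. Qed.
Let dm_ge0 A : 0 <= dm mg g0 A. Proof. by apply: integral_ge0 => x _; rewrite lee_fin. Qed.
Let dm_sa : semi_sigma_additive (dm mg g0).
Proof.
apply: semi_sigma_additive_nng_induced.
  exact: measurableT_comp.
by move=> x; rewrite lee_fin.
Qed.

HB.instance Definition _ := isMeasure.Build _ _ _ (dm mg g0) dm0 dm_ge0 dm_sa.
End dmeas.
Arguments dm {d T R} mu {g}.

Section slice.
Local Open Scope ereal_scope.
Context d1 d2 (T1 : measurableType d1) (T2 : measurableType d2) (R : realType).
Variables (m : {measure set T2 -> \bar R}) (t : T1).

Definition slice := fun S : set (T1 * T2) => m [set y | S (t, y)].

Let mpair : measurable_fun setT (pair t : T2 -> T1 * T2).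
Proof. by apply: measurable_fun_pair => //; exact: measurable_cst. Qed.

Let slice0 : slice set0 = 0.
Proof. by rewrite /slice (_ : [set y | _] = set0) ?measure0. Qed.

Let slice_ge0 A : 0 <= slice A.
Proof. exact: measure_ge0. Qed.

Let slice_sa : semi_sigma_additive slice.
Proof.
move=> F mF tF mUF; rewrite /slice.
rewrite (_ : [set y | _] = \bigcup_n (pair t @^-1` F n)); last first.
  by apply/seteqP; split => y /=.
apply: measure_semi_sigma_additive.
- by move=> n; rewrite -[X in measurable X]setTI; exact: mpair.
- apply/trivIsetP => /= i j _ _ ij; rewrite -preimage_setI.
  by move/trivIsetP : tF => /(_ _ _ _ _ ij) ->//; rewrite preimage_set0.
- by rewrite -preimage_bigcup -[X in measurable X]setTI; exact: mpair.
Qed.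

HB.instance Definition _ := isMeasure.Build _ _ _ slice slice0 slice_ge0 slice_sa.
End slice.
Arguments slice {d1 d2 T1 T2 R}.

Section mkprob.
Local Open Scope ereal_scope.
Context d (T : measurableType d) (R : realType) (m : {measure set T -> \bar R}).
Hypothesis m1 : m setT = 1.

Definition mkprob (_ : m setT = 1) := fun A => m A.
Let mk0 : mkprob m1 set0 = 0. Proof. exact: measure0. Qed.
Let mk_ge0 A : 0 <= mkprob m1 A. Proof. exact: measure_ge0. Qed.
Let mk_sa : semi_sigma_additive (mkprob m1). Proof. exact: measure_semi_sigma_additive. Qed.
HB.instance Definition _ := isMeasure.Build _ _ _ (mkprob m1) mk0 mk_ge0 mk_sa.
HB.instance Definition _ := Measure_isProbability.Build _ _ _ (mkprob m1) m1.
End mkprob.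
Arguments mkprob {d T R m}.

Section intmin.
Local Open Scope ereal_scope.
Context (R : realType) (mu : {measure set R -> \bar R}) (u v : R -> R).
Hypotheses (mu_ : measurable_fun setT u) (mv : measurable_fun setT v)
  (u0 : forall y, (0 <= u y)%R) (v0 : forall y, (0 <= v y)%R).

Definition Bset := setT `&` [set y | (v y)%:E < (u y)%:E].

Lemma mBset : measurable Bset.
Proof. by apply: measurable_lte => //; exact: measurableT_comp. Qed.

Lemma int_min :
  \int[mu]_y (Num.min (u y) (v y))%:E + \int[mu]_(y in Bset) (u y)%:E =
  \int[mu]_(y in Bset) (v y)%:E + \int[mu]_y (u y)%:E.
Proof.
have mB := mBset; have mCB : measurable (~` Bset) by apply: measurableC.
have mu' : measurable_fun setT (fun y => (u y)%:E) by exact: measurableT_comp.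
have mv' : measurable_fun setT (fun y => (v y)%:E) by exact: measurableT_comp.
have dj : [disjoint Bset & ~` Bset] by rewrite /disj_set setICr.
rewrite -[in X in _ = _ + X](setUv Bset) -[in X in X + _ = _](setUv Bset).
rewrite !ge0_integral_setU //; last 4 first.
- by rewrite setUv.
- by move=> y _; rewrite lee_fin.
- by rewrite setUv; apply: measurableT_comp => //; exact: measurable_minr.
- by move=> y _; rewrite lee_fin le_min u0 v0.
rewrite (eq_integral (fun y => (v y)%:E)); last first.
  by move=> y; rewrite inE => -[_ /= h]; rewrite min_r// ltW// -lte_fin.
rewrite [X in _ + X + _](eq_integral (fun y => (u y)%:E)); last first.
  move=> y; rewrite inE => /= h; rewrite min_l// leNgt; apply/negP => h'; apply: h.
  by split => //; rewrite lte_fin.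
by rewrite addeAC [RHS]addeA.
Qed.

End intmin.
Arguments Bset {R} u v.
Arguments mBset {R u v}.
Arguments int_min {R} mu {u v}.

Lemma nrm (R : realType) (m1 m0 : {measure set R -> \bar R}) (P : probability R R) (A : set R) :
  measurable A -> m1 setT = m0 setT -> m0 setT \is a fin_num ->
  (m1 setT * mnormalize m0 P A = m0 A)%E.
Proof.
move=> mA e f; rewrite /mnormalize e; case: ifPn => [/orP[/eqP e0|/eqP einf]|].
- rewrite e0 mul0e; apply/esym/eqP; rewrite eq_le measure_ge0 andbT -e0.
  by apply: le_measure; rewrite ?inE.
- by rewrite einf in f.
- rewrite negb_or => /andP[n0 _].
  set x := fine (m0 setT).
  have hx : x != 0%R by apply: contra n0 => /eqP h; rewrite -(fineK f) -/x h.
  rewrite -(fineK f) -/x muleCA -EFinM mulfV // mule1 //.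
Qed.


Lemma int_add (R : realType) (mu : {measure set R -> \bar R}) (A : set R) (g1 g2 : R -> R) :
  measurable A -> measurable_fun setT g1 -> measurable_fun setT g2 ->
  (forall y, 0 <= g1 y) -> (forall y, 0 <= g2 y) ->
  (\int[mu]_(y in A) (g1 y + g2 y)%:E = \int[mu]_(y in A) (g1 y)%:E + \int[mu]_(y in A) (g2 y)%:E)%E.
Proof.
move=> mA m1 m2 p1 p2.
under eq_integral do rewrite EFinD.
apply: ge0_integralD => //.
- by move=> y _; rewrite lee_fin.
- by apply: measurable_funTS; exact: measurableT_comp.
- by move=> y _; rewrite lee_fin.
- by apply: measurable_funTS; exact: measurableT_comp.
Qed.

Section construct.
Local Open Scope ereal_scope.
Context (R : realType) (mu : {measure set R -> \bar R})
  (Q : bool -> bool -> {measure set R -> \bar R}) (h : bool -> bool -> R -> R) (pz p : R).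
Hypothesis Q1 : forall z : bool, (Q false z setT + Q true z setT = 1)%E.
Hypothesis mh : forall dd z, measurable_fun setT (h dd z).
Hypothesis h0 : forall dd z y, (0 <= h dd z y)%R.
Hypothesis Qh : forall dd z A, measurable A -> Q dd z A = \int[mu]_(y in A) (h dd z y)%:E.
Hypothesis pz01 : (0 < pz < 1)%R.
Hypothesis p0 : (0 <= p)%R.
Hypothesis pu1 : p%:E <= Q true false setT.
Hypothesis pu2 : p%:E <= Q false true setT.
Hypothesis pl1 : forall A, measurable A -> Q true false A - Q true true A <= p%:E.
Hypothesis pl0 : forall A, measurable A -> Q false true A - Q false false A <= p%:E.

Lemma QT_le1' dd z : Q dd z setT <= 1.
Proof. by rewrite -(Q1 z); case: dd; [rewrite leeDr|rewrite leeDl]. Qed.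

Lemma Qfin dd z A : measurable A -> Q dd z A \is a fin_num.
Proof.
move=> mA; rewrite ge0_fin_numE ?measure_ge0//.
apply: (le_lt_trans (le_measure _ _ _ (subsetT A))); rewrite ?inE//.
by apply: (le_lt_trans (QT_le1' dd z)); rewrite ltey.
Qed.

Definition q dd z := fine (Q dd z setT).
Lemma qE dd z : (q dd z)%:E = Q dd z setT.
Proof. by rewrite fineK // Qfin. Qed.

Lemma q1 z : (q false z + q true z = 1)%R.
Proof. by apply: EFin_inj; rewrite EFinD !qE Q1. Qed.

Definition m1 y := Num.min (h true false y) (h true true y).
Definition m0 y := Num.min (h false true y) (h false false y).

Lemma mm1 : measurable_fun setT m1. Proof. exact: measurable_minr. Qed.
Lemma mm0 : measurable_fun setT m0. Proof. exact: measurable_minr. Qed.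
Lemma m1_ge0 y : (0 <= m1 y)%R. Proof. by rewrite le_min !h0. Qed.
Lemma m0_ge0 y : (0 <= m0 y)%R. Proof. by rewrite le_min !h0. Qed.

Definition I1 := \int[mu]_y (m1 y)%:E.
Definition I0 := \int[mu]_y (m0 y)%:E.

Lemma I1_fin : I1 \is a fin_num.
Proof.
rewrite ge0_fin_numE; last by apply: integral_ge0 => y _; rewrite lee_fin m1_ge0.
apply: (@le_lt_trans _ _ (Q true false setT)); last by rewrite -ge0_fin_numE ?Qfin.
rewrite Qh //; apply: ge0_le_integral => //.
- by move=> y _; rewrite lee_fin m1_ge0.
- exact: measurableT_comp mm1.
- exact: measurableT_comp.
- by move=> y _; rewrite lee_fin ge_min lexx.
Qed.

Lemma I0_fin : I0 \is a fin_num.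
Proof.
rewrite ge0_fin_numE; last by apply: integral_ge0 => y _; rewrite lee_fin m0_ge0.
apply: (@le_lt_trans _ _ (Q false true setT)); last by rewrite -ge0_fin_numE ?Qfin.
rewrite Qh //; apply: ge0_le_integral => //.
- by move=> y _; rewrite lee_fin m0_ge0.
- exact: measurableT_comp mm0.
- exact: measurableT_comp.
- by move=> y _; rewrite lee_fin ge_min lexx.
Qed.

Lemma I1_bnd : (0 <= q true false - p <= fine I1)%R.
Proof.
apply/andP; split; first by rewrite subr_ge0 -lee_fin qE.
have := int_min mu (mh true false) (mh true true) (h0 true false) (h0 true true).
have mB := mBset (mh true false) (mh true true).
rewrite -/m1 -/I1 -!Qh //.
have := pl1 _ mB.
have fa := Qfin true false _ mB; have fb := Qfin true true _ mB.
rewrite -(fineK fa) -(fineK fb) -(fineK I1_fin) -qE.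
rewrite -EFinB lee_fin -!EFinD => H1 E1; have {E1}E1 := EFin_inj E1; lra.
Qed.

Lemma I0_bnd : (0 <= q false true - p <= fine I0)%R.
Proof.
apply/andP; split; first by rewrite subr_ge0 -lee_fin qE.
have := int_min mu (mh false true) (mh false false) (h0 false true) (h0 false false).
have mB := mBset (mh false true) (mh false false).
rewrite -/m0 -/I0 -!Qh //.
have := pl0 _ mB.
have fa := Qfin false true _ mB; have fb := Qfin false false _ mB.
rewrite -(fineK fa) -(fineK fb) -(fineK I0_fin) -qE.
rewrite -EFinB lee_fin -!EFinD => H1 E1; have {E1}E1 := EFin_inj E1; lra.
Qed.

Definition th1 := theta (q true false - p) (fine I1).
Definition th0 := theta (q false true - p) (fine I0).
Lemma th1P : (0 <= th1 <= 1)%R /\ (th1 * fine I1 = q true false - p)%R.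
Proof. exact: thetaP I1_bnd. Qed.
Lemma th0P : (0 <= th0 <= 1)%R /\ (th0 * fine I0 = q false true - p)%R.
Proof. exact: thetaP I0_bnd. Qed.

Definition ga y := (th1 * m1 y)%R.
Definition gc y := (h true true y - ga y)%R.
Definition gd1 y := (h true false y - ga y)%R.
Definition gn y := (th0 * m0 y)%R.
Definition gc0 y := (h false false y - gn y)%R.
Definition gd0 y := (h false true y - gn y)%R.

Lemma ga_le y : (ga y <= m1 y)%R.
Proof. by case: th1P => /andP[t0 t1] _; rewrite /ga ler_piMl // m1_ge0. Qed.
Lemma gn_le y : (gn y <= m0 y)%R.
Proof. by case: th0P => /andP[t0 t1] _; rewrite /gn ler_piMl // m0_ge0. Qed.

Lemma ga_ge0 y : (0 <= ga y)%R.
Proof. by case: th1P => /andP[t0 t1] _; rewrite /ga mulr_ge0 // m1_ge0. Qed.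
Lemma gn_ge0 y : (0 <= gn y)%R.
Proof. by case: th0P => /andP[t0 t1] _; rewrite /gn mulr_ge0 // m0_ge0. Qed.
Lemma gc_ge0 y : (0 <= gc y)%R.
Proof. rewrite /gc subr_ge0; apply: le_trans (ga_le y) _; by rewrite ge_min lexx orbT. Qed.
Lemma gd1_ge0 y : (0 <= gd1 y)%R.
Proof. rewrite /gd1 subr_ge0; apply: le_trans (ga_le y) _; by rewrite ge_min lexx. Qed.
Lemma gc0_ge0 y : (0 <= gc0 y)%R.
Proof. rewrite /gc0 subr_ge0; apply: le_trans (gn_le y) _; by rewrite ge_min lexx orbT. Qed.
Lemma gd0_ge0 y : (0 <= gd0 y)%R.
Proof. rewrite /gd0 subr_ge0; apply: le_trans (gn_le y) _; by rewrite ge_min lexx. Qed.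

Lemma mga : measurable_fun setT ga.
Proof. by apply: measurable_funM => //; exact: mm1. Qed.
Lemma mgn : measurable_fun setT gn.
Proof. by apply: measurable_funM => //; exact: mm0. Qed.
Lemma mgc : measurable_fun setT gc. Proof. by apply: measurable_funB => //; exact: mga. Qed.
Lemma mgd1 : measurable_fun setT gd1. Proof. by apply: measurable_funB => //; exact: mga. Qed.
Lemma mgc0 : measurable_fun setT gc0. Proof. by apply: measurable_funB => //; exact: mgn. Qed.
Lemma mgd0 : measurable_fun setT gd0. Proof. by apply: measurable_funB => //; exact: mgn. Qed.

Lemma Iga : \int[mu]_y (ga y)%:E = (q true false - p)%:E.
Proof.
under eq_integral do rewrite EFinM.
rewrite ge0_integralZl //.
- by rewrite -/I1 -(fineK I1_fin) -EFinM; case: th1P => _ ->.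
- exact: measurableT_comp mm1.
- by move=> y _; rewrite lee_fin m1_ge0.
- by case: th1P => /andP[t0 _] _; rewrite lee_fin.
Qed.

Lemma Ign : \int[mu]_y (gn y)%:E = (q false true - p)%:E.
Proof.
under eq_integral do rewrite EFinM.
rewrite ge0_integralZl //.
- by rewrite -/I0 -(fineK I0_fin) -EFinM; case: th0P => _ ->.
- exact: measurableT_comp mm0.
- by move=> y _; rewrite lee_fin m0_ge0.
- by case: th0P => /andP[t0 _] _; rewrite lee_fin.
Qed.

Lemma S11 A : measurable A -> \int[mu]_(y in A) (ga y)%:E + \int[mu]_(y in A) (gc y)%:E = Q true true A.
Proof.
move=> mA; rewrite -int_add //; [|exact: mga|exact: mgc|exact: ga_ge0|exact: gc_ge0].
by rewrite Qh //; apply: eq_integral => y _; rewrite /gc addrC subrK.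
Qed.
Lemma S10 A : measurable A -> \int[mu]_(y in A) (ga y)%:E + \int[mu]_(y in A) (gd1 y)%:E = Q true false A.
Proof.
move=> mA; rewrite -int_add //; [|exact: mga|exact: mgd1|exact: ga_ge0|exact: gd1_ge0].
by rewrite Qh //; apply: eq_integral => y _; rewrite /gd1 addrC subrK.
Qed.
Lemma S01 A : measurable A -> \int[mu]_(y in A) (gn y)%:E + \int[mu]_(y in A) (gd0 y)%:E = Q false true A.
Proof.
move=> mA; rewrite -int_add //; [|exact: mgn|exact: mgd0|exact: gn_ge0|exact: gd0_ge0].
by rewrite Qh //; apply: eq_integral => y _; rewrite /gd0 addrC subrK.
Qed.
Lemma S00 A : measurable A -> \int[mu]_(y in A) (gn y)%:E + \int[mu]_(y in A) (gc0 y)%:E = Q false false A.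
Proof.
move=> mA; rewrite -int_add //; [|exact: mgn|exact: mgc0|exact: gn_ge0|exact: gc0_ge0].
by rewrite Qh //; apply: eq_integral => y _; rewrite /gc0 addrC subrK.
Qed.

Lemma int_fin (g : R -> R) : measurable_fun setT g -> (forall y, 0 <= g y)%R ->
  \int[mu]_y (g y)%:E <= 1 -> \int[mu]_y (g y)%:E \is a fin_num.
Proof.
move=> mg g0 le1; rewrite ge0_fin_numE; last by apply: integral_ge0 => y _; rewrite lee_fin.
by apply: le_lt_trans le1 _; rewrite ltey.
Qed.

Lemma addE_fin (x z : R) (y : \bar R) : x%:E + y = z%:E -> y = (z - x)%:E.
Proof.
case: y => [r||] //=.
move=> hh; have {hh}hh := EFin_inj hh; rewrite -hh; congr EFin; lra.
Qed.

Lemma Igc : \int[mu]_y (gc y)%:E = (q true true - (q true false - p))%:E.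
Proof. by apply: addE_fin; rewrite -Iga S11 // qE. Qed.
Lemma Igd1 : \int[mu]_y (gd1 y)%:E = p%:E.
Proof. have := S10 _ measurableT; rewrite Iga -qE => /addE_fin ->; congr EFin; lra. Qed.
Lemma Igc0 : \int[mu]_y (gc0 y)%:E = (q false false - (q false true - p))%:E.
Proof. by apply: addE_fin; rewrite -Ign S00 // qE. Qed.
Lemma Igd0 : \int[mu]_y (gd0 y)%:E = p%:E.
Proof. have := S01 _ measurableT; rewrite Ign -qE => /addE_fin ->; congr EFin; lra. Qed.

Definition g1 (t : bool * bool) : R -> R :=
  match t with (true, true) => ga | (false, true) => gc | (true, false) => gd1 | (false, false) => gn end.
Definition g0 (t : bool * bool) : R -> R :=
  match t with (true, true) => ga | (false, true) => gc0 | (true, false) => gd0 | (false, false) => gn end.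

Lemma mg1 t : measurable_fun setT (g1 t).
Proof. case: t => [[] []]; [exact: mga|exact: mgd1|exact: mgc|exact: mgn]. Qed.
Lemma mg0 t : measurable_fun setT (g0 t).
Proof. case: t => [[] []]; [exact: mga|exact: mgd0|exact: mgc0|exact: mgn]. Qed.
Lemma g1_ge0 t y : (0 <= g1 t y)%R.
Proof. case: t => [[] []]; [exact: ga_ge0|exact: gd1_ge0|exact: gc_ge0|exact: gn_ge0]. Qed.
Lemma g0_ge0 t y : (0 <= g0 t y)%R.
Proof. case: t => [[] []]; [exact: ga_ge0|exact: gd0_ge0|exact: gc0_ge0|exact: gn_ge0]. Qed.

Definition rho1 t := dm mu (mg1 t) (g1_ge0 t).
Definition rho0 t := dm mu (mg0 t) (g0_ge0 t).

Lemma rho_mass t : rho1 t setT = rho0 t setT.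
Proof.
rewrite /rho1 /rho0 /dm; case: t => [[] []] //=.
- by rewrite Igd1 Igd0.
- rewrite Igc Igc0; congr EFin; have := q1 true; have := q1 false; lra.
Qed.

Lemma rho0_fin t : rho0 t setT \is a fin_num.
Proof.
rewrite /rho0 /dm; case: t => [[] []] /=.
- by rewrite Iga.
- by rewrite Igd0.
- by rewrite Igc0.
- by rewrite Ign.
Qed.

Definition nu0 t := mnormalize (rho0 t) (@dirac _ R 0%R R).
Definition K t := rho1 t \x nu0 t.

Lemma K_X1 t A : measurable A -> K t (A `*` setT) = rho1 t A.
Proof.
move=> mA; rewrite /K product_measure1E //.
by rewrite [X in _ * X](_ : _ = 1) ?mule1 //; exact: probability_setT.
Qed.

Lemma K_X0 t A : measurable A -> K t (setT `*` A) = rho0 t A.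
Proof.
move=> mA; rewrite /K product_measure1E //.
rewrite /nu0 nrm //; [exact: rho_mass|exact: rho0_fin].
Qed.

Definition tk (k : nat) : bool * bool :=
  match k with 0 => (true,true) | 1 => (false,true) | 2 => (false,false) | _ => (true,false) end.
Definition M := msum (fun k => slice (K (tk k)) (tk k)) 4.

Lemma MX (xb : bool * bool -> bool) (Y : set (R * R)) :
  M ([set t | xb t] `*` Y) =
  ((if xb (true,true) then K (true,true) Y else 0) + (if xb (false,true) then K (false,true) Y else 0)) +
  ((if xb (false,false) then K (false,false) Y else 0) + (if xb (true,false) then K (true,false) Y else 0)).
Proof.
rewrite /M /msum !big_ord_recl big_ord0 adde0 /= /slice /=.
have E1 (b : bool) : [set y | b /\ Y y] = if b then Y else set0.
  by case: b; apply/seteqP; split => y /=; [case|move=> ?; split|case|].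
rewrite !E1 /K addeA.
by case: (xb (true,true)); case: (xb (false,true)); case: (xb (false,false));
  case: (xb (true,false)); rewrite /= ?measure0.
Qed.

Lemma mxb (xb : bool * bool -> bool) : measurable [set t | xb t].
Proof.
rewrite (_ : [set t | xb t] = ([set true] `*` [set b | xb (true, b)]) `|` ([set false] `*` [set b | xb (false, b)])).
  by apply: measurableU; apply: measurableX.
apply/seteqP; split => -[[] b] /=; [by left|by right|by case => -[]|by case => -[]].
Qed.

Lemma rho1T t : rho1 t setT = (match t with (true,true) => q true false - p | (false,true) => q true true - (q true false - p)
   | (true,false) => p | (false,false) => q false true - p end)%:E.
Proof. rewrite /rho1 /dm; case: t => [[] []] /=; [exact: Iga|exact: Igd1|exact: Igc|exact: Ign]. Qed.

Lemma MT : M setT = 1.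
Proof.
rewrite (_ : setT = [set t | true] `*` setT); last by apply/seteqP; split.
rewrite MX /= -setXTT !K_X1 // !rho1T -!EFinD; congr EFin.
have := q1 true; lra.
Qed.

Definition Pm := M \x bernoulli_prob pz.

Lemma bernE z : bernoulli_prob pz [set z] = (if z then pz else 1 - pz)%:E.
Proof.
case/andP: pz01 => a b.
rewrite bernoulli_probE; last by apply/andP; split; apply: ltW.
have inb (x y : bool) : (x \in [set y]) = (x == y).
  by apply/idP/idP => [/set_mem ->//|/eqP ->]; exact/mem_set.
rewrite !diracE !inb; case: z => /=; rewrite ?mule1 ?mule0 ?adde0 ?add0e //.
Qed.

Lemma PmX X B : measurable X -> measurable B -> Pm (X `*` B) = M X * bernoulli_prob pz B.
Proof. by move=> mX mB; rewrite /Pm product_measure1E. Qed.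

Lemma PmT : Pm setT = 1.
Proof.
rewrite -setXTT PmX // MT mul1e.
by case/andP: pz01 => a b; exact: probability_setT.
Qed.

Definition Om := ((bool * bool) * (R * R) * bool)%type.
Definition Z0 (w : Om) := w.2.
Definition D00 (w : Om) := w.1.1.1.
Definition D10 (w : Om) := w.1.1.2.
Definition Y0 (dd z : bool) (w : Om) : R := if dd then w.1.2.1 else w.1.2.2.

Lemma mY0 dd z : measurable_fun setT (Y0 dd z).
Proof.
rewrite /Y0; case: dd.
- apply: measurableT_comp; first exact: measurable_fst.
  apply: measurableT_comp; first exact: measurable_snd.
  exact: measurable_fst.
- apply: measurableT_comp; first exact: measurable_snd.
  apply: measurableT_comp; first exact: measurable_snd.
  exact: measurable_fst.
Qed.

Lemma mD00 : measurable_fun setT D00.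
Proof.
apply: measurableT_comp; first exact: measurable_fst.
apply: measurableT_comp; first exact: measurable_fst.
exact: measurable_fst.
Qed.

Lemma mD10 : measurable_fun setT D10.
Proof.
apply: measurableT_comp; first exact: measurable_snd.
apply: measurableT_comp; first exact: measurable_fst.
exact: measurable_fst.
Qed.

Lemma mZ0 : measurable_fun setT Z0.
Proof. exact: measurable_snd. Qed.

Definition Lp (r : (bool * bool) * (R * R)) : R * R * R * R * bool * bool :=
  (r.2.1, r.2.1, r.2.2, r.2.2, r.1.2, r.1.1).

Lemma mLp : measurable_fun setT Lp.
Proof.
have m21 : measurable_fun setT (fun r : (bool * bool) * (R * R) => r.2.1).
  by apply: measurableT_comp; [exact: measurable_fst|exact: measurable_snd].
have m22 : measurable_fun setT (fun r : (bool * bool) * (R * R) => r.2.2).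
  by apply: measurableT_comp; [exact: measurable_snd|exact: measurable_snd].
have m12 : measurable_fun setT (fun r : (bool * bool) * (R * R) => r.1.2).
  by apply: measurableT_comp; [exact: measurable_snd|exact: measurable_fst].
have m11 : measurable_fun setT (fun r : (bool * bool) * (R * R) => r.1.1).
  by apply: measurableT_comp; [exact: measurable_fst|exact: measurable_fst].
by repeat apply: measurable_fun_pair.
Qed.

Lemma model_ok (P : probability Om R) (HP : forall S, P S = Pm S) :
  RA_ER_model pz (fun dd z => Q dd z) P Y0 D00 D10 Z0 /\ P [set w | D00 w = true /\ D10 w = false] = p%:E.
Proof.
have PX X B : measurable X -> measurable B -> P (X `*` B) = M X * bernoulli_prob pz B.
  by move=> mX mB; rewrite HP; exact: PmX.
have PZ z : P [set w | Z0 w = z] = bernoulli_prob pz [set z].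
  rewrite (_ : [set w | Z0 w = z] = setT `*` [set z]); last first.
    by apply/seteqP; split => -[r b]; rewrite /Z0 /=; [move=> ->; split|case=> _ ->].
  by rewrite PX // MT mul1e.
split; last first.
  rewrite (_ : [set w | _] = ([set t | t == (true,false)] `*` setT) `*` setT); last first.
    apply/seteqP; split => -[[[d0 d1] [y1 y0]] b]; rewrite /D00 /D10 /=;
    case: d0; case: d1 => /=; intuition; try congruence;
    repeat match goal with H : is_true (_ == _) |- _ => move: H; rewrite /= => H end; done.
  rewrite PX //; last by apply: measurableX => //; exact: mxb.
  rewrite probability_setT mule1 MX /= ?adde0 ?add0e -setXTT K_X1 // rho1T //.
split; first by move=> a b; exact: mY0.
split; first exact: mD00.
split; first exact: mD10.
split; first exact: mZ0.
split.
  move=> z E mE.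
  have mLE : measurable (Lp @^-1` E) by apply: mpre => //; exact: mLp.
  rewrite PZ.
  rewrite (_ : [set w | Z0 w = z] `&` _ = (Lp @^-1` E) `*` [set z]); last first.
    by apply/seteqP; split => -[r b]; rewrite /Z0 /= => -[? ?].
  rewrite (_ : latent_vec Y0 D00 D10 @^-1` E = (Lp @^-1` E) `*` setT); last first.
    by apply/seteqP; split => -[r b] //= [].
  by rewrite !PX // probability_setT mule1 muleC.
split; first by [].
split.
  rewrite (_ : [set w | Z0 w] = setT `*` [set true]); last first.
    by apply/seteqP; split => -[r b]; rewrite /Z0 /=; [move=> ->; split|case=> _ ->].
  by rewrite PX // MT mul1e bernE.
move=> A mA dd z.
rewrite PZ.
rewrite (_ : [set w | _] = ([set t | (if z then t.2 else t.1) == dd] `*`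
   (if dd then A `*` setT else setT `*` A)) `*` [set z]); last first.
  apply/seteqP; split => -[[[d0 d1] [y1 y0]] b]; rewrite /obsY /obsD /Y0 /D00 /D10 /Z0 /=;
  case: b; case: z; case: dd; case: d0; case: d1 => /=; intuition; try congruence;
  repeat match goal with H : is_true (_ == _) |- _ => move: H; rewrite /= => H end; done.
have mY : measurable (if dd then A `*` setT else setT `*` A) by case: dd; apply: measurableX.
rewrite PX //; last by apply: measurableX => //; exact: mxb.
rewrite MX; congr (_ * _).
case: dd mY; case: z => mY /=; rewrite ?K_X1 ?K_X0 // ?adde0 ?add0e /rho1 /rho0 /dm /=.
- exact: S11.
- exact: S10.
- exact: S01.
- rewrite addeC; exact: S00.
Qed.

Lemma construct_ok : pdf_identified_set pz (fun dd z => Q dd z) p.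
Proof. by exists _, Om, (mkprob PmT), Y0, D00, D10, Z0; apply: model_ok. Qed.

End construct.

Theorem proposition1 (R : realType) (pz : R)
  (Q : bool -> bool -> {measure set R -> \bar R})
  (mu : {measure set R -> \bar R}) (f : bool -> bool -> R -> \bar R) :
  0 < pz < 1 ->
  (forall z : bool, (Q false z setT + Q true z setT = 1)%E) ->
  (forall dd z : bool, measurable_fun setT (f dd z)) ->
  (forall (dd z : bool) (y : R), (0 <= f dd z y)%E) ->
  (forall (dd z : bool) (A : set R), measurable A ->
     Q dd z A = (\int[mu]_(y in A) f dd z y)%E) ->
  (density_cond mu f ->
     pdf_identified_set pz (fun dd z => Q dd z) =
     [set p : R | (pdf_lower (fun dd z => Q dd z) <= p%:E <= pdf_upper (fun dd z => Q dd z))%E])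
  /\ (~ density_cond mu f -> pdf_identified_set pz (fun dd z => Q dd z) = set0)
  /\ ((exists p : R, pdf_identified_set pz (fun dd z => Q dd z) p) -> density_cond mu f).
Proof.
move=> pz01 Q1 mf f0 Qf.
have sub : forall p, pdf_identified_set pz (fun dd z => Q dd z) p ->
    (pdf_lower (fun dd z => Q dd z) <= p%:E <= pdf_upper (fun dd z => Q dd z))%E.
  move=> p [d [Om [P [Yp [D0 [D1 [Z [HM Hp]]]]]]]].
  apply/andP; split.
  - rewrite /pdf_lower ge_max; apply/andP; split; last by rewrite -Hp measure_ge0.
    rewrite ge_max; apply/andP; split; apply: ge_ereal_sup => _ [A mA <-]; rewrite -Hp.
    + exact: (@sup0 _ _ _ _ _ _ _ _ _ _ pz01 HM).
    + exact: (@sup1 _ _ _ _ _ _ _ _ _ _ pz01 HM).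
  - rewrite /pdf_upper le_min; apply/andP; split; rewrite -Hp.
    + exact: (@up1 _ _ _ _ _ _ _ _ _ _ pz01 HM).
    + exact: (@up2 _ _ _ _ _ _ _ _ _ _ pz01 HM).
have dens : forall p : R,
    (pdf_lower (fun dd z => Q dd z) <= p%:E <= pdf_upper (fun dd z => Q dd z))%E ->
    density_cond mu f.
  by move=> p /andP[hl hu]; exact: (@dens_from R Q mu f Q1 mf f0 Qf p%:E).
have sup : forall p : R,
    (pdf_lower (fun dd z => Q dd z) <= p%:E <= pdf_upper (fun dd z => Q dd z))%E ->
    pdf_identified_set pz (fun dd z => Q dd z) p.
  move=> p /andP[hl hu].
  move: hl; rewrite /pdf_lower ge_max => /andP[+ hp0]; rewrite ge_max => /andP[hs0 hs1].
  move: hu; rewrite /pdf_upper le_min => /andP[hu1 hu2].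
  apply: (@construct_ok R mu Q (fun dd z y => fine (f dd z y)) pz p Q1).
  - exact: (@mh R f mf).
  - by move=> dd z y; exact: fine_ge0.
  - by move=> dd z A mA; exact: (@Qh R Q mu f Q1 mf f0 Qf dd z A mA).
  - exact: pz01.
  - by move: hp0; rewrite lee_fin.
  - exact: hu2.
  - by move=> A mA; apply: le_trans hs1; exact: (@ubnd_lower R Q true A mA).
  - by move=> A mA; apply: le_trans hs0; exact: (@ubnd_lower R Q false A mA).
split.
  move=> _; apply/seteqP; split => p; [exact: sub|exact: sup].
split.
  move=> nD; apply/seteqP; split => p // Hp; exfalso; apply: nD; exact: (dens p (sub p Hp)).
by move=> [p Hp]; exact: (dens p (sub p Hp)).
Qed.
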